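(* Consider the two-armed improving bandit instance on the horizon $[0,T]$ with arms $f_1(t)=1$ for all $t$, and $f_2(t)=0$ for $t<\theta$, $f_2(t)=\alpha(t-\theta)$ for $t\ge\theta$, where $\theta$ is unknown. Suppose an agent is $\tilde\alpha$-gritty, i.e. guesses that the slope of the increasing portion of $f_2$ is $\tilde\alpha>0$, and that the agent's goal is to maximize the competitive ratio. Then the agent plays $f_2$ for $T-\sqrt{2T/\tilde\alpha}$ units of time, after which it switches to $f_1$ permanently.
   Context: Time is continuous. The argument $t$ of each arm's reward function is the amount of time that arm has been played so far. The reward from an arm is the integral of its reward function over the time spent on it. A strategy achieves competitive ratio $g$ if $\mathrm{ALG}/\mathrm{OPT}\ge g$, where $\mathrm{ALG}$ is the strategy's total reward and $\mathrm{OPT}$ is the optimal achievable total reward in hindsight. The agent considers only strategies that play $f_2$ for some time $s$ and then switch permanently to $f_1$. It chooses the switch point $s$ to maximize its worst-case competitive ratio, computed with its guessed slope $\tilde\alpha$. This worst case is over the unknown $\theta$. There are two extreme cases. If $f_2$ never increases, the ratio is $\frac{T-s}{T}$, which decreases in $s$. If $f_2$ begins increasing right after the switch, the ratio is $\frac{T-s}{\frac{\tilde\alpha}{2}(T-s)^2}$, which increases in $s$. The competitive-ratio-maximizing agent chooses the $s$ at which these two quantities are equal. *)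

(* Defs.v *)
From Stdlib Require Import Reals Lra.
Open Scope R_scope.

(* Strategy: play f2 for time s, then f1 permanently (0 <= s < T).
   Competitive ratio in the extreme case where f2 never increases:
   ALG = T - s, OPT = T. *)
Definition ratio_flat (T s : R) : R := (T - s) / T.

(* Competitive ratio in the extreme case where f2 starts increasing (with
   the guessed slope atil (= tilde alpha)) right after the switch: ALG = T - s,
   OPT = (atil/2) (T - s)^2. *)
Definition ratio_incr (atil T s : R) : R := (T - s) / ((atil / 2) * (T - s) ^ 2).

(* Worst-case competitive ratio over the unknown theta, computed with the
   guessed slope atil (= tilde alpha): the minimum over the two extreme cases. *)
Definition worst_ratio (atil T s : R) : R := Rmin (ratio_flat T s) (ratio_incr atil T s).

Definition agent_choice (atil T s : R) : Prop :=
  0 <= s < T /\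
  forall s', 0 <= s' < T -> worst_ratio atil T s' <= worst_ratio atil T s.

(* Main.v *)
Require Import Defs.
From Stdlib Require Import Reals Lra.
Open Scope R_scope.

Lemma incr_eq (atil T s : R) : 0 < atil -> s < T ->
  ratio_incr atil T s = 2 / (atil * (T - s)).
Proof. intros Ha Hs. unfold ratio_incr. field. split; lra. Qed.

Lemma key (atil T c u : R) : 0 < atil -> 0 < T -> 0 < c -> c * c * atil = 2 * T ->
  0 < u ->
  Rmin (u / T) (2 / (atil * u)) <= c / T /\
  (u <> c -> Rmin (u / T) (2 / (atil * u)) < c / T).
Proof.
  intros Ha HT Hc Hcc Hu.
  assert (E : c / T = 2 / (atil * c)).
  { field_simplify_eq; try lra; try nra; try (split; lra). }
  destruct (Rle_or_lt u c) as [H|H].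
  - split.
    + eapply Rle_trans. apply Rmin_l.
      unfold Rdiv; apply Rmult_le_compat_r; [left; apply Rinv_0_lt_compat; lra| lra].
    + intros Hne. eapply Rle_lt_trans. apply Rmin_l.
      unfold Rdiv; apply Rmult_lt_compat_r; [apply Rinv_0_lt_compat; lra| lra].
  - assert (L : 2 / (atil * u) < c / T).
    { rewrite E. unfold Rdiv. apply Rmult_lt_compat_l; [lra|].
      apply Rinv_lt_contravar.
      apply Rmult_lt_0_compat; apply Rmult_lt_0_compat; lra.
      apply Rmult_lt_compat_l; lra. }
    pose proof (Rmin_r (u / T) (2 / (atil * u))).
    split; [|intros]; lra.
Qed.

Theorem lemma2 (atil T : R) (Hat : 0 < atil) (HT : 2 / atil <= T) :
  (forall s : R, agent_choice atil T s <-> s = T - sqrt (2 * T / atil)) /\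
  ratio_flat T (T - sqrt (2 * T / atil)) = ratio_incr atil T (T - sqrt (2 * T / atil)).
Proof.
  assert (HT0 : 0 < T).
  { eapply Rlt_le_trans; [|exact HT]. unfold Rdiv. apply Rmult_lt_0_compat; [lra|].
    apply Rinv_0_lt_compat; lra. }
  set (c := sqrt (2 * T / atil)).
  assert (Hq : 0 < 2 * T / atil).
  { unfold Rdiv. apply Rmult_lt_0_compat; [lra|apply Rinv_0_lt_compat; lra]. }
  assert (Hc : 0 < c) by (apply sqrt_lt_R0; exact Hq).
  assert (Hcc0 : c * c = 2 * T / atil) by (apply sqrt_sqrt; lra).
  assert (Hcc : c * c * atil = 2 * T) by (rewrite Hcc0; field; lra).
  assert (HT' : 2 <= T * atil).
  { apply (Rmult_le_compat_r atil) in HT; [|lra].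
    replace (2 / atil * atil) with 2 in HT by (field; lra). lra. }
  assert (HcT : c <= T) by nra.
  assert (W : forall s, 0 <= s < T ->
     worst_ratio atil T s = Rmin ((T - s) / T) (2 / (atil * (T - s)))).
  { intros s Hs. unfold worst_ratio, ratio_flat. rewrite incr_eq; lra. }
  assert (Ws : worst_ratio atil T (T - c) = c / T).
  { rewrite W by lra. replace (T - (T - c)) with c by ring.
    assert (E : c / T = 2 / (atil * c)).
    { field_simplify_eq; try lra; try nra; try (split; lra). }
    rewrite <- E. apply Rmin_left. lra. }
  split.
  - intros s. split.
    + intros [Hs Hmax].
      specialize (Hmax (T - c) ltac:(lra)). rewrite Ws, W in Hmax by lra.
      destruct (Req_dec (T - s) c) as [E|E]; [lra|].
      destruct (key atil T c (T - s) Hat HT0 Hc Hcc ltac:(lra)) as [_ K].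
      specialize (K E). lra.
    + intros ->. split; [lra|].
      intros s' Hs'. rewrite Ws, W by lra.
      destruct (key atil T c (T - s') Hat HT0 Hc Hcc ltac:(lra)) as [K _]. exact K.
  - fold c. unfold ratio_flat. rewrite incr_eq by lra.
    replace (T - (T - c)) with c by ring.
    field_simplify_eq; try lra; try nra; try (split; lra).
Qed.
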